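(* Let $(k,\alpha)\in\Upsilon$, $w\in\operatorname{rext}(L_{k,\alpha})$, $\bar w\in\operatorname{rext}(w,L_{k,\alpha})$, let $x\in\Sigma_k$ be a letter that is a recurrent factor of $\bar w$, and let $t\in L^{\mathbb N,R}_{k,\alpha}$ with $\operatorname{occur}(t,x)=0$. Then there are finite words $w_1,w_2,g\in\Sigma_k^*$ such that $(w_1,w_2,x,g,t)\in\Gamma(k,\alpha)$ and $w$ is a prefix of $w_1w_2xg$.
   Context: $\Sigma_k$ is an alphabet with $k$ letters. For a nonempty finite word $r$ and a rational $\beta\ge 1$ with $\beta|r|$ an integer, the $\beta$-power $r^\beta$ is the word $rr\cdots rt$ of length $\beta|r|$, where $t$ is a prefix of $r$. For rational $\alpha\ge1$, a word is $\alpha$-power free if it has no factor that is a $\beta$-power with $\beta\ge\alpha$, and $\alpha^+$-power free if it has no factor that is a $\beta$-power with $\beta>\alpha$; ''$\alpha$'' may denote a rational number or a symbol $\alpha^+$. $L_{k,\alpha}$ is the set of finite $\alpha$-power free words over $\Sigma_k$, and $L^{\mathbb N,R}_{k,\alpha}$ the set of right infinite words over $\Sigma_k$ all of whose finite factors lie in $L_{k,\alpha}$. $\Upsilon$ is the set of pairs: $(k,\alpha)$ with $k=3$ and rational $\alpha>2$; $(k,\alpha)$ with $k>3$ and rational $\alpha\ge2$; $(k,\alpha^+)$ with $k\ge3$ and rational $\alpha\ge2$. $\operatorname{occur}(w,s)$ is the number of occurrences of a nonempty word $s$ as a factor of $w$; $s$ is recurrent in an infinite word $w$ if $\operatorname{occur}(w,s)=\infty$.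 Prefixes include the empty word and the word itself if finite. A word $w\in L$ is right extendable in $L$ if for every $n\in\mathbb N$ there is $u\in L$ with $|u|=n$ and $wu\in L$; $\operatorname{rext}(L)$ is the set of such words, and for $w\in\operatorname{rext}(L)$, $\operatorname{rext}(w,L)$ is the set of right infinite words all of whose finite prefixes lie in $L$ and which have $w$ as a prefix. For $(k,\alpha)\in\Upsilon$, $(w_1,w_2,x,g,t)\in\Gamma(k,\alpha)$ means: $w_1,w_2,g\in\Sigma_k^*$; $x\in\Sigma_k$; $w_1w_2xg\in L_{k,\alpha}$; $t\in L^{\mathbb N,R}_{k,\alpha}$; $\operatorname{occur}(t,x)=0$; $g$ is a prefix of $t$; $\operatorname{occur}(w_2xgy,xgy)=1$, where $y\in\Sigma_k$ is the letter with $gy$ a prefix of $t$; and $\operatorname{occur}(w_2,x)\ge\operatorname{occur}(w_1,x)$. *)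

(* Defs.v *)
From HB Require Import structures.
From mathcomp Require Import all_boot all_order all_algebra.
Set Implicit Arguments. Unset Strict Implicit. Unset Printing Implicit Defensive.
Import Order.TTheory GRing.Theory Num.Theory.

Definition word (k : nat) := seq 'I_k.
Definition iword (k : nat) := nat -> 'I_k.

(* An exponent "alpha" is either a rational alpha (plus = false)
   or the symbol alpha^+ (plus = true). *)
Record expo := Expo { ex_val : rat; ex_plus : bool }.

(* u is the beta-power r^beta: r nonempty, beta >= 1, |u| = beta |r|,
   and u = r r ... r t with t a prefix of r, i.e. u_i = r_(i mod |r|). *)
Definition is_beta_power (T : eqType) (u r : seq T) (beta : rat) : Prop :=
  [/\ (0 < size r)%N, (1 <= beta)%R,
      ((size u)%:R = beta * (size r)%:R :> rat)%R &
      forall x0 i, (i < size u)%N -> nth x0 u i = nth x0 r (i %% size r)].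

Definition power_free (T : eqType) (a : expo) (w : seq T) : Prop :=
  forall (u r : seq T) (beta : rat), infix u w -> is_beta_power u r beta ->
    if ex_plus a then (beta <= ex_val a)%R else (beta < ex_val a)%R.

Definition L (k : nat) (a : expo) (w : word k) : Prop := power_free a w.

Definition ifactor k (t : iword k) (i n : nat) : word k :=
  [seq t (i + j)%N | j <- iota 0 n].
Definition iprefix k (t : iword k) (n : nat) : word k := ifactor t 0 n.

Definition LNR (k : nat) (a : expo) (t : iword k) : Prop :=
  forall i n, L a (ifactor t i n).

Definition Upsilon (k : nat) (a : expo) : Prop :=
  [\/ (~~ ex_plus a /\ k = 3 /\ (2 < ex_val a)%R),
      (~~ ex_plus a /\ (3 < k)%N /\ (2 <= ex_val a)%R) |
      (ex_plus a /\ (3 <= k)%N /\ (2 <= ex_val a)%R)].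

Definition occur (T : eqType) (w s : seq T) : nat :=
  count (fun i => take (size s) (drop i w) == s) (iota 0 (size w)).

Definition ioccur0 k (t : iword k) (x : 'I_k) : Prop := forall i, t i != x.

Definition recurrent_letter k (t : iword k) (x : 'I_k) : Prop :=
  forall N, exists2 i, (N <= i)%N & t i = x.

Definition rext (k : nat) (a : expo) (w : word k) : Prop :=
  L a w /\ forall n, exists u : word k, [/\ L a u, size u = n & L a (w ++ u)].

Definition rext_w (k : nat) (a : expo) (w : word k) (t : iword k) : Prop :=
  (forall n, L a (iprefix t n)) /\ iprefix t (size w) = w.

Definition Gamma (k : nat) (a : expo) (w1 w2 : word k) (x : 'I_k) (g : word k)
    (t : iword k) : Prop :=
  let y := t (size g) in
  [/\ L a (w1 ++ w2 ++ x :: g), LNR a t, ioccur0 t x,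
      iprefix t (size g) = g &
      occur (w2 ++ x :: g ++ [:: y]) (x :: g ++ [:: y]) = 1%N] /\
  (occur w1 [:: x] <= occur w2 [:: x])%N.

(* Main.v *)
Require Import Defs.
From HB Require Import structures.
From mathcomp Require Import all_boot all_order all_algebra.
From mathcomp Require Import zify.
From Stdlib Require Import Classical.

Lemma size_ifactor k (f : iword k) a L : size (ifactor f a L) = L.
Proof. by rewrite /ifactor size_map size_iota. Qed.

Lemma ifactor_split k (f : iword k) a b c :
  ifactor f a (b + c) = ifactor f a b ++ ifactor f (a + b) c.
Proof.
rewrite /ifactor iotaD map_cat; congr (_ ++ _).
rewrite add0n -[b in iota b _]addn0 iotaDl -map_comp; apply: eq_map => i /=.
by rewrite addnA.
Qed.

Lemma nth_ifactor k (f : iword k) a L i x0 : i < L -> nth x0 (ifactor f a L) i = f (a + i).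
Proof. move=> iL; rewrite /ifactor (nth_map 0) ?size_iota // nth_iota //. Qed.

Lemma take_drop_if k (f : iword k) a L (e : seq 'I_k) i c :
  i + c <= L -> take c (drop i (ifactor f a L ++ e)) = ifactor f (a + i) c.
Proof.
move=> H; have -> : L = i + (c + (L - (i + c))) by lia.
rewrite !ifactor_split -!catA drop_size_cat ?size_ifactor //.
by rewrite take_size_cat ?size_ifactor.
Qed.

Lemma count0 (T : eqType) (p : pred T) s : (forall i, i \in s -> ~~ p i) -> count p s = 0.
Proof.
elim: s => //= a s IH H; rewrite IH; last by move=> i Hi; apply: H; rewrite inE Hi orbT.
by rewrite (negbTE (H a _)) // inE eqxx.
Qed.

Lemma occur_split (T : eqType) (w2 s : seq T) : s != [::] ->
  (forall i, i < size w2 -> take (size s) (drop i (w2 ++ s)) != s) ->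
  occur (w2 ++ s) s = 1.
Proof.
move=> s0 H; rewrite /occur size_cat iotaD count_cat add0n.
rewrite count0; last by move=> i; rewrite mem_iota add0n => /H.
case: s s0 H => // c s _ H /=.
rewrite drop_size_cat // take_oversize // eqxx /= count0 //.
move=> i; rewrite mem_iota => /andP [H1 H2]; apply/negP => /eqP E.
have HH := congr1 size E; rewrite size_take size_drop size_cat /= in HH; move: HH; case: ifP => H3 HH; move: H1 H2 H3 HH; rewrite /=; clear; move: (size s) (size w2) => a b; rewrite -/(nat) in i *; lia.
Qed.

Lemma occur_letter k (f : iword k) a L x :
  occur (ifactor f a L) [:: x] = count (fun i => f (a + i) == x) (iota 0 L).
Proof.
rewrite /occur size_ifactor; apply: eq_in_count => i; rewrite mem_iota add0n => Hi.
rewrite -[ifactor f a L]cats0 take_drop_if; last by rewrite addn1.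
by rewrite /ifactor /= addn0 eqseq_cons andbT.
Qed.

Lemma take_if k (f : iword k) a L c : c <= L -> take c (ifactor f a L) = ifactor f a c.
Proof.
move=> H; have := @take_drop_if k f a L [::] 0 c; rewrite drop0 cats0 addn0; apply.
by rewrite add0n.
Qed.

Definition Pocc k (wbar t : iword k) (x : 'I_k) j p : bool :=
  ifactor wbar p j.+1 == x :: iprefix t j.
Arguments Pocc {k}.

Lemma Pocc_mono k (wbar t : iword k) x j j' p :
  Pocc wbar t x j' p -> j <= j' -> Pocc wbar t x j p.
Proof.
move=> /eqP E le; apply/eqP; have := congr1 (take j.+1) E.
by rewrite take_if // /= /iprefix take_if.
Qed.

Lemma Pocc_not k (wbar t : iword k) x i p :
  ioccur0 t x -> wbar i = x -> p < i -> ~~ Pocc wbar t x (i - p) p.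
Proof.
move=> Ht Hi lt; apply/negP => /eqP E; have := congr1 (fun s => nth x s (i - p)) E.
have e : i - p = (i - p).-1.+1 by lia.
rewrite nth_ifactor // [in X in _ = X -> _]e /= nth_ifactor; last by lia.
have -> : p + (i - p) = i by lia.
by rewrite Hi add0n => H; move: (Ht (i - p).-1); rewrite -H eqxx.
Qed.

Lemma Pocc0 k (wbar t : iword k) x p : Pocc wbar t x 0 p = (wbar p == x).
Proof. by rewrite /Pocc /ifactor /= addn0 eqseq_cons andbT. Qed.

Lemma fin_occ k (wbar t : iword k) x : recurrent_letter wbar x -> ioccur0 t x ->
  forall q, exists J, forall j p, J <= j -> p < q -> ~~ Pocc wbar t x j p.
Proof.
move=> Hr Ht; elim=> [|q [J HJ]]; first by exists 0.
have [i Hi Hx] := Hr q.+1.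
exists (maxn J (i - q)) => j p Hj Hp.
rewrite ltnS leq_eqVlt in Hp; case/orP: Hp => [/eqP -> | Hp].
  apply/negP => /(Pocc_mono) H.
  have := H (i - q); rewrite (negbTE (@Pocc_not _ _ _ _ _ _ Ht Hx _)) //.
  by move=> /(_ (leq_trans (leq_maxr _ _) Hj)).
by apply: HJ => //; apply: leq_trans (leq_maxl _ _) Hj.
Qed.

Definition cnt k (f : iword k) x a L := count (fun i => f (a + i) == x) (iota 0 L).
Arguments cnt {k}.

Lemma cnt_mono k (f : iword k) x a L L' : L <= L' -> cnt f x a L <= cnt f x a L'.
Proof.
move=> H; rewrite /cnt -(subnKC H) iotaD count_cat; apply: leq_addr.
Qed.

Lemma cnt_big k (f : iword k) x : recurrent_letter f x ->
  forall m c, exists L, c <= cnt f x m L.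
Proof.
move=> Hr m; elim=> [|c [L HL]]; first by exists 0.
have [i Hi Hx] := Hr (m + L).
set d := i - (m + L).
exists (L + d.+1).
rewrite /cnt iotaD count_cat -[d.+1]addn1 iotaD count_cat /= add0n.
have -> : m + (L + d) = i by rewrite /d; lia.
rewrite Hx eqxx /=; rewrite /cnt in HL; lia.
Qed.

Lemma assemble k a (w : word k) (wbar : iword k) x (t : iword k) m n j :
  rext_w a w wbar -> LNR a t -> ioccur0 t x -> m <= n ->
  Pocc wbar t x j n -> (forall p, m <= p -> p < n -> ~~ Pocc wbar t x j.+1 p) ->
  cnt wbar x 0 m <= cnt wbar x m (n - m) -> size w <= n ->
  exists (w1 w2 g : word k), Gamma a w1 w2 x g t /\ prefix w (w1 ++ w2 ++ x :: g).
Proof.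
move=> [Hpre Hw] Ht Hx Hmn /eqP HP H2 H3 Hs.
exists (ifactor wbar 0 m), (ifactor wbar m (n - m)), (iprefix t j).
have E1 : ifactor wbar 0 m ++ ifactor wbar m (n - m) ++ x :: iprefix t j
          = iprefix wbar (n + j.+1).
  rewrite -HP /iprefix ifactor_split add0n catA.
  have -> : ifactor wbar m (n - m) = ifactor wbar (0 + m) (n - m) by rewrite add0n.
  by rewrite -ifactor_split subnKC.
have Ej : iprefix t j ++ [:: t j] = iprefix t j.+1.
  by rewrite /iprefix -addn1 ifactor_split /ifactor /= add0n addn0.
split; [split; [split; rewrite ?E1|]|].
- by apply: Hpre.
- exact: Ht.
- exact: Hx.
- by rewrite size_ifactor.
- rewrite size_ifactor Ej; apply: occur_split => // i Hi.
  rewrite size_ifactor in Hi.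
  have -> : ifactor wbar m (n - m) ++ x :: iprefix t j.+1
            = ifactor wbar m (n - m + j.+1) ++ [:: t j].
    by rewrite -Ej ifactor_split subnKC // HP -catA.
  have -> : size (x :: iprefix t j.+1) = j.+2 by rewrite /= size_map size_iota.
  rewrite take_drop_if; last by lia.
  by apply: H2; lia.
- by rewrite !occur_letter.
- rewrite E1 prefixE /iprefix take_if; last by apply: leq_trans Hs (leq_addr _ _).
  by move: Hw; rewrite /iprefix => ->.
Qed.

Lemma find_j (S : nat -> Prop) j0 : S 0 -> ~ S j0 -> exists j, S j /\ ~ S j.+1.
Proof.
elim: j0 => [|j0 IH] H0 Hn; first by [].
case: (classic (S j0)) => Hs; [by exists j0 | exact: IH].
Qed.

Arguments fin_occ {k wbar t x}.
Arguments Pocc_mono {k wbar t x j j' p}.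
Arguments cnt_big {k f x}.
Arguments cnt_mono {k f x a L L'}.
Arguments find_j {S j0}.

Theorem mainTheorem6 (k : nat) (a : expo) (w : word k) (wbar : iword k)
    (x : 'I_k) (t : iword k) :
  Upsilon k a -> rext a w -> rext_w a w wbar -> recurrent_letter wbar x ->
  LNR a t -> ioccur0 t x ->
  exists (w1 w2 g : word k),
    Gamma a w1 w2 x g t /\ prefix w (w1 ++ w2 ++ x :: g).
Proof.
move=> _ _ Hwb Hr Ht Hx.
pose S j := forall N, exists p, N <= p /\ Pocc wbar t x j p.
case: (classic (forall j, S j)) => [Hall | Hnot].
- have [J HJ] := fin_occ Hr Hx (size w).
  have exP : exists p, Pocc wbar t x J p by have [p [_ Hp]] := Hall J 0; exists p.
  case: (ex_minnP exP) => n Pn Hmin.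
  apply: (@assemble k a w wbar x t 0 n J) => //.
  + move=> p _ Hp; apply/negP => Pp.
    have := Hmin p (Pocc_mono Pp (leqnSn J)); lia.
  + rewrite leqNgt; apply/negP => Hn.
    by have := HJ J n (leqnn J) Hn; rewrite Pn.
- have [j0 Hj0] := not_all_ex_not _ _ Hnot.
  have S0 : S 0.
    move=> N; have [i Hi Hxi] := Hr N; exists i; split => //.
    by rewrite Pocc0 Hxi.
  have [j [Sj nSj]] := find_j S0 Hj0.
  have [N HN] : exists N, forall p, N <= p -> ~~ Pocc wbar t x j.+1 p.
    apply: NNPP => H; apply: nSj => N; apply: NNPP => H'; apply: H; exists N.
    by move=> p Hp; apply/negP => Pp; apply: H'; exists p.
  set m := maxn N (size w).
  have [L HL] := cnt_big Hr m (cnt wbar x 0 m).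
  have [n [Hn Pn]] := Sj (m + L).
  have HmN : N <= m by apply: leq_maxl.
  have Hmw : size w <= m by apply: leq_maxr.
  apply: (@assemble k a w wbar x t m n j) => //.
  + lia.
  + by move=> p Hp _; apply: HN; apply: leq_trans Hp.
  + apply: leq_trans HL _; apply: cnt_mono; lia.
  + lia.
Qed.
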